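(* Let $\mathcal{L}$ be a Lie algebra and let $(U,\rho)$ be a finite-dimensional representation of $\mathcal{L}$. Suppose $x,y_1,y_2,\ldots\in\mathcal{L}$ satisfy $[x,y_k]=\nu_ky_k$ with $\nu_k\in\mathbb{C}$ for $k=1,2,\ldots$. Then the set $\{\nu_k:\rho(y_k)\neq 0\}$ has at most $(\dim U)^2-\dim U+1$ distinct elements. *)

(* Defs.v *)
(* The complex field is  R[i] = complex R  for a realType R
   (mathcomp-real-closed's complex numbers over the reals). *)
From HB Require Import structures.
From mathcomp Require Import all_boot all_order all_algebra.
From mathcomp Require Import reals.
From mathcomp.real_closed Require Export complex.
Set Implicit Arguments. Unset Strict Implicit. Unset Printing Implicit Defensive.
Import Order.TTheory GRing.Theory Num.Theory.
Local Open Scope ring_scope.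

Definition is_lie_bracket (F : fieldType) (L : lmodType F) (br : L -> L -> L) :=
  [/\ (forall (a : F) (x y z : L), br (a *: x + y) z = a *: br x z + br y z),
      (forall (a : F) (x y z : L), br z (a *: x + y) = a *: br z x + br z y),
      (forall x : L, br x x = 0) &
      (forall x y z : L, br x (br y z) + br y (br z x) + br z (br x y) = 0)].

Definition is_lie_rep (F : fieldType) (L : lmodType F) (br : L -> L -> L)
  (n : nat) (rho : L -> 'M[F]_n) :=
  (forall (a : F) (x y : L), rho (a *: x + y) = a *: rho x + rho y) /\
  (forall x y : L, rho (br x y) = rho x *m rho y - rho y *m rho x).

(* Main.v *)
Require Import Defs.
From HB Require Import structures.
From mathcomp Require Import all_boot all_order all_algebra.
From mathcomp Require Import reals.
From mathcomp.real_closed Require Import complex.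
Import Order.TTheory GRing.Theory Num.Theory.
Local Open Scope ring_scope.
Local Open Scope complex_scope.


Set Implicit Arguments. Unset Strict Implicit.
Lemma comm_prod (F : closedFieldType) m (X A : 'M[F]_m.+1) (nu : F) (rs : seq F) :
  X * A - A * X = nu *: A ->
  (\prod_(z <- rs) (X - (z + nu)%:M)) * A = A * \prod_(z <- rs) (X - z%:M).
Proof.
move=> H; elim: rs => [|z rs IH]; first by rewrite !big_nil mul1r mulr1.
rewrite !big_cons -mulrA IH mulrA mulrA; congr (_ * _).
rewrite mulrBl mulrBr -!mulmxE !mul_scalar_mx !mul_mx_scalar !mulmxE.
move/eqP: H; rewrite subr_eq => /eqP ->.
by rewrite scalerDl [z *: A + _]addrC opprD addrA [nu *: A + _]addrC addrK.
Qed.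

Lemma prod_unit_cancel (F : closedFieldType) m (P : seq 'M[F]_m.+1) (A : 'M[F]_m.+1) :
  all (fun M => M \is a GRing.unit) P -> (\prod_(M <- P) M) * A = 0 -> A = 0.
Proof.
elim: P => [|M P IH] /=; first by rewrite big_nil mul1r.
case/andP=> uM uP; rewrite big_cons -mulrA => H.
apply: IH => //; apply: (mulrI uM); by rewrite H mulr0.
Qed.

Lemma key (F : closedFieldType) m (X A : 'M[F]_m.+1) (nu : F) (rs : seq F) :
  char_poly X = \prod_(z <- rs) ('X - z%:P) ->
  X * A - A * X = nu *: A -> A != 0 ->
  exists c z, [/\ c \in rs, z \in rs & nu = c - z].
Proof.
move=> Hc H nA.
have H0 : (\prod_(z <- rs) (X - (z + nu)%:M)) * A = 0.
  rewrite comm_prod //.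
  have -> : \prod_(z <- rs) (X - z%:M) = horner_mx X (char_poly X).
    rewrite Hc rmorph_prod; apply: eq_bigr => z _.
    by rewrite rmorphB /= horner_mx_C horner_mx_X.
  by rewrite Cayley_Hamilton mulr0.
have : ~~ all (fun M => M \is a GRing.unit) [seq X - (z + nu)%:M | z <- rs].
  apply/negP => Hall; move/negP: nA; apply; apply/eqP.
  by apply: (prod_unit_cancel Hall); rewrite big_map.
case/allPn => M /mapP [z zin ->] nu_.
exists (z + nu), z; split => //; last by rewrite addrC addKr.
have : eigenvalue X (z + nu).
  by rewrite /eigenvalue /eigenspace kermx_eq0 row_free_unit.
by rewrite eigenvalue_root_char Hc root_prod_XsubC.
Qed.

Unset Implicit Arguments. Set Strict Implicit.
Theorem lemma2 (R : realType) (L : lmodType R[i]) (br : L -> L -> L)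
  (n : nat) (rho : L -> 'M[R[i]]_n)
  (x : L) (y : nat -> L) (nu : nat -> R[i]) :
  is_lie_bracket br -> is_lie_rep br rho ->
  (forall k : nat, br x (y k) = nu k *: y k) ->
  forall s : seq R[i], uniq s ->
    (forall v, v \in s -> exists k : nat, nu k = v /\ rho (y k) != 0) ->
    (size s <= n ^ 2 - n + 1)%N.

Proof.
move=> Hbr [Hlin Hmor] Hx s us Hs.
case: n rho Hlin Hmor Hs => [|m] rho Hlin Hmor Hs.
  case: s us Hs => [|v s'] // _ Hs.
  have [k [_]] := Hs v (mem_head _ _).
  by rewrite flatmx0 eqxx.
set X := rho x.
have [rs Hrs] := closed_field_poly_normal (char_poly X).
rewrite (monicP (char_poly_monic X)) scale1r in Hrs.
have szrs : size rs = m.+1.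
  by apply: succn_inj; rewrite -(size_prod_XsubC rs id) -Hrs size_char_poly.
have rho0 : rho 0 = 0.
  have := Hlin 1 0 0; rewrite !scale1r addr0 => H.
  by apply: (addrI (rho 0)); rewrite addr0 -H.
have rhoZ a v : rho (a *: v) = a *: rho v.
  by have := Hlin a v 0; rewrite !addr0 rho0 addr0.
pose D := 0 :: [seq rs`_j - rs`_i | i <- iota 0 m.+1, j <- rem i (iota 0 m.+1)].
have sub : {subset s <= D}.
  move=> v /Hs [k [<- nz]].
  have HXA : X * rho (y k) - rho (y k) * X = nu k *: rho (y k).
    by rewrite -!mulmxE -Hmor Hx rhoZ.
  have [c [z [cin zin ->]]] := key Hrs HXA nz.
  have ic := index_mem c rs; have iz := index_mem z rs.
  rewrite cin in ic; rewrite zin in iz.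
  case: (eqVneq (index c rs) (index z rs)) => Hi.
    have -> : c = z by rewrite -(nth_index 0 cin) -(nth_index 0 zin) Hi.
    by rewrite subrr mem_head.
  rewrite inE; apply/orP; right.
  apply/allpairsPdep; exists (index z rs), (index c rs); split.
  - by rewrite mem_iota add0n -szrs.
  - rewrite (mem_rem_uniq _ (iota_uniq _ _)) inE /= Hi /=.
    by rewrite -[(0 :: _)%N]/(iota 0 m.+1) mem_iota add0n -szrs.
  - by rewrite !(nth_index 0).
have := uniq_leq_size us sub.
rewrite /D -cat1s size_cat size_allpairs_dep.
have -> : [seq size (rem i (iota 0 m.+1)) | i <- iota 0 m.+1] = nseq m.+1 m.
  have -> : nseq m.+1 m = [seq m | i <- iota 0 m.+1] by rewrite -[in LHS](size_iota 0 m.+1); elim: (iota 0 m.+1) => //= a l ->.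
  apply/eq_in_map => i iin; rewrite size_rem ?size_iota //.
rewrite sumn_nseq => Hle.
have E : (m.+1 ^ 2 - m.+1 = m * m.+1)%N.
  rewrite expnS expn1 mulSn; exact: addKn.
rewrite E addnC; exact: Hle.
Qed.
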